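(* Let $\mathcal K$ be a simplicial complex on $[m]$ and let $\{a_J:J\subseteq[m]\}$ be elements of an abelian group such that whenever $A,B\subseteq[m]$ satisfy $\mathcal K_{A\cup B}=\mathcal K_A\cup\mathcal K_B$, we have $a_{A\cup B}=a_A+a_B-a_{A\cap B}$. Then for every $J\subseteq[m]$, $$a_J=\sum_{B\in\mathcal K^f_J}(-1)^{|B|}\sum_{I\subseteq B}(-1)^{|I|}a_I=\sum_{I\in\mathcal K^f_J}\bigl(1-\chi(\operatorname{lk}_{\mathcal K^f_J}I)\bigr)a_I.$$
   Context: $\mathcal K_I=\{\sigma\in\mathcal K:\sigma\subseteq I\}$. $\mathcal K^f$ is the flag complex on the 1-skeleton of $\mathcal K$ (faces: subsets $I\subseteq[m]$ all of whose subsets of size $\le2$ lie in $\mathcal K$), and $\mathcal K^f_J=(\mathcal K^f)_J$; sums include the empty face. $\operatorname{lk}_{\mathcal L}I=\{J\in\mathcal L:J\cap I=\varnothing,\ J\cup I\in\mathcal L\}$ and $\chi(\mathcal L)=\sum_{\varnothing\ne A\in\mathcal L}(-1)^{|A|-1}$. *)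

(* Defs.v *)
From mathcomp Require Import all_boot all_order all_algebra.
Set Implicit Arguments. Unset Strict Implicit. Unset Printing Implicit Defensive.
Import GRing.Theory Num.Theory.
Local Open Scope ring_scope.

Definition simplicial_complex (m : nat) (K : {set {set 'I_m}}) : Prop :=
  [/\ set0 \in K,
      (forall s t : {set 'I_m}, t \subset s -> s \in K -> t \in K)
    & (forall i : 'I_m, [set i] \in K)].

Definition restr (m : nat) (K : {set {set 'I_m}}) (I : {set 'I_m}) :
  {set {set 'I_m}} := [set s in K | s \subset I].

Definition flagc (m : nat) (K : {set {set 'I_m}}) : {set {set 'I_m}} :=
  [set I : {set 'I_m} |
     [forall s : {set 'I_m}, ((s \subset I) && (#|s| <= 2)%N) ==> (s \in K)]].

Definition link (m : nat) (L : {set {set 'I_m}}) (I : {set 'I_m}) :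
  {set {set 'I_m}} := [set J in L | (J :&: I == set0) && (J :|: I \in L)].

Definition euler (m : nat) (L : {set {set 'I_m}}) : int :=
  \sum_(A in L | A != set0) (-1) ^+ (#|A|.-1).

(* Main.v *)
Require Import Defs.
From mathcomp Require Import all_boot all_order all_algebra.
Set Implicit Arguments. Unset Strict Implicit. Unset Printing Implicit Defensive.
Import GRing.Theory Num.Theory.
Local Open Scope ring_scope.


Lemma split_x (m : nat) (G : zmodType) (F : {set 'I_m} -> G) (B : {set 'I_m}) (x : 'I_m) : x \in B ->
  \sum_(I : {set 'I_m} | I \subset B) F I =
  \sum_(I : {set 'I_m} | I \subset B :\ x) (F I + F (x |: I)).
Proof.
move=> xB; rewrite big_split /= (bigID (fun I : {set 'I_m} => x \in I)) /= addrC.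
congr (_ + _).
  apply: eq_bigl => I; rewrite subsetD1; by rewrite andbC.
rewrite (reindex_onto (fun I => x |: I) (fun I => I :\ x)) /=; last first.
  by move=> I /andP [_ xI]; rewrite setD1K.
apply: eq_bigl => I; rewrite setU11 andbT subsetD1.
have [xI|nxI] := boolP (x \in I).
  rewrite andbF; case: eqP => [E|]; last by rewrite andbF.
  by move: xI; rewrite -E !inE eqxx.
rewrite andbT.
have -> : (x |: I) :\ x = I.
  apply/setP => y; rewrite !inE; case: eqP => // ->.
  by rewrite (negbTE nxI).
rewrite eqxx andbT subUset sub1set xB.
done.
Qed.

Lemma signU1 (m : nat) (x : 'I_m) (I : {set 'I_m}) : x \notin I -> (-1) ^+ #|x |: I| = - ((-1) ^+ #|I|) :> int.
Proof. by move=> xI; rewrite cardsU1 xI add1n exprS mulN1r. Qed.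

Lemma setU1K (m : nat) (x : 'I_m) (I : {set 'I_m}) : x \notin I -> (x |: I) :\ x = I.
Proof.
move=> nxI; apply/setP => y; rewrite !inE; case: eqP => // ->.
by rewrite (negbTE nxI).
Qed.

Definition SS (m : nat) (G : zmodType) (a : {set 'I_m} -> G) (B : {set 'I_m}) :=
  \sum_(I : {set 'I_m} | I \subset B) a I *~ ((-1) ^+ #|I|).

Lemma SS_U1 (m : nat) (G : zmodType) (a : {set 'I_m} -> G) (x : 'I_m) (B : {set 'I_m}) : x \notin B ->
  SS a (x |: B) = SS a B - SS (fun I => a (x |: I)) B.
Proof.
move=> xB; rewrite /SS (split_x _ (setU11 x B)) setU1K // big_split /=.
rewrite /= -sumrN; congr (_ + _); apply: eq_bigr => I IB.
have xI : x \notin I by apply: contra xB; apply: (subsetP IB).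
by rewrite signU1 // mulrNz.
Qed.

Lemma mobius (m : nat) (G : zmodType) n : forall (a : {set 'I_m} -> G) (J : {set 'I_m}), #|J| = n ->
  a J = \sum_(B : {set 'I_m} | B \subset J) SS a B *~ ((-1) ^+ #|B|).
Proof.
elim: n => [|n IH] a J.
  move/eqP; rewrite cards_eq0 => /eqP ->.
  rewrite (eq_bigl (pred1 set0)); last by move=> B; rewrite subset0.
  rewrite big_pred1_eq /SS (eq_bigl (pred1 set0)); last by move=> B; rewrite subset0.
  by rewrite big_pred1_eq cards0 expr0 !mulr1z.
move=> cJ.
have : (0 < #|J|)%N by rewrite cJ.
case/card_gt0P => x xJ.
have cJ' : #|J :\ x| = n by move: cJ; rewrite (cardsD1 x J) xJ add1n => -[].
rewrite (split_x _ xJ) /= -{1}(setD1K xJ) (IH (fun I => a (x |: I)) _ cJ') /=.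
apply: eq_bigr => B BJ.
have xB : x \notin B by apply/negP => /(subsetP BJ); rewrite !inE eqxx.
rewrite SS_U1 // signU1 // mulrNz mulrzBl.
by rewrite opprB addrC subrK.
Qed.

Lemma zmod_aux (G : zmodType) (u v w : G) : u - v + (- w + (v + w - u)) = 0.
Proof. by rewrite (addrC v w) !addrA addrNK addrNK subrr. Qed.

Lemma SS_zero (m : nat) (G : zmodType) (K : {set {set 'I_m}}) (a : {set 'I_m} -> G)
  (Kdown : forall s t : {set 'I_m}, t \subset s -> s \in K -> t \in K)
  (H : forall A B : {set 'I_m},
     restr K (A :|: B) = restr K A :|: restr K B ->
     a (A :|: B) = a A + a B - a (A :&: B))
  (i j : 'I_m) (B : {set 'I_m}) : i != j -> [set i; j] \notin K -> i \in B -> j \in B -> SS a B = 0.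
Proof.
move=> ij ijK iB jB.
have jB' : j \in B :\ i by rewrite !inE eq_sym ij.
rewrite /SS (split_x _ iB) (split_x _ jB') big1 // => I IB.
have iI : i \notin I by apply/negP => /(subsetP IB); rewrite !inE eqxx andbF.
have jI : j \notin I by apply/negP => /(subsetP IB); rewrite !inE eqxx.
have ijI : i \notin j |: I by rewrite !inE negb_or ij.
rewrite (signU1 ijI) !signU1 // opprK !mulrNz.
have EU : (i |: I) :|: (j |: I) = i |: (j |: I).
  by apply/setP => y; rewrite !inE; case: (y == i); case: (y == j); case: (y \in I).
have EI : (i |: I) :&: (j |: I) = I.
  apply/setP => y; rewrite !inE.
  have [->|yi] := eqVneq y i; first by rewrite (negbTE ij) (negbTE iI).
  by case: (y \in I); rewrite /= ?orbT ?andbF.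
have HR : restr K ((i |: I) :|: (j |: I)) = restr K (i |: I) :|: restr K (j |: I).
  apply/setP => s; rewrite !inE EU.
  apply/idP/idP; last first.
    case/orP => /andP [sK sS]; rewrite sK /=; apply: (subset_trans sS);
      apply/subsetP => y; rewrite !inE; case: (y == i); case: (y == j) => //=; by rewrite ?orbT.
  case/andP => sK sS; rewrite sK /=.
  have [i_s|nis] := boolP (i \in s).
    have [js|njs] := boolP (j \in s).
      have sub : [set i; j] \subset s.
        by apply/subsetP => y; rewrite !inE; case/orP => /eqP ->.
      by move: ijK; rewrite (Kdown _ _ sub sK).
    apply/orP; left; apply/subsetP => y ys.
    have := subsetP sS y ys; rewrite !inE.
    have [yj|//] := eqVneq y j; by move: ys njs; rewrite yj => ->.
  apply/orP; right; apply/subsetP => y ys.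
  have := subsetP sS y ys; rewrite !inE.
  have [yi|//] := eqVneq y i; by move: ys nis; rewrite yi => ->.
have := H _ _ HR; rewrite EU EI => ->.
by rewrite !mulrzDl mulNrz zmod_aux.
Qed.


Lemma coef_id (m : nat) (L : {set {set 'I_m}})
  (Ldown : forall s t : {set 'I_m}, t \subset s -> s \in L -> t \in L)
  (I : {set 'I_m}) : I \in L ->
  \sum_(B : {set 'I_m} | (B \in L) && (I \subset B)) ((-1) ^+ #|I| * (-1) ^+ #|B|)
    = 1 - euler (link L I).
Proof.
move=> IL; rewrite -mulr_sumr.
rewrite (reindex_onto (fun C : {set 'I_m} => C :|: I) (fun B => B :\: I)) /=; last first.
  move=> B /andP [_ IB]; apply/setP => y; rewrite !inE.
  by case: (boolP (y \in I)) => yI; rewrite ?orbT ?orbF //= (subsetP IB).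
rewrite (eq_bigl (fun C => C \in link L I)); last first.
  move=> C; rewrite /link inE subsetUr andbT setDUl setDv setU0.
  apply/idP/idP.
    case/andP => CIL /eqP CE; rewrite CIL andbT (Ldown _ _ (subsetUl C I) CIL) /=.
    by rewrite setI_eq0; apply/setDidPl.
  case/and3P => _ CI CIL; rewrite CIL /=; apply/eqP/setDidPl.
  by rewrite -setI_eq0.
have -> : \sum_(C | C \in link L I) (-1) ^+ #|C :|: I| =
          \sum_(C | C \in link L I) ((-1) ^+ #|C| * (-1) ^+ #|I|) :> int.
  apply: eq_bigr => C; rewrite /link inE => /and3P [_ /eqP CI _].
  by rewrite cardsU CI cards0 subn0 exprD.
rewrite -mulr_suml mulrCA -exprMn mulN1r opprK expr1n mulr1.
rewrite (bigD1 set0) /=; last by rewrite /link inE set0I eqxx set0U IL (Ldown _ _ (sub0set I) IL).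
rewrite cards0 expr0 /euler -sumrN; congr (_ + _); apply: eq_bigr => C /andP [_ C0].
by rewrite -{1}(prednK (_ : 0 < #|C|)%N) ?card_gt0 // exprS mulN1r.
Qed.

Lemma L_down (m : nat) (K : {set {set 'I_m}}) (J : {set 'I_m}) :
  forall s t : {set 'I_m}, t \subset s -> s \in restr (flagc K) J ->
    t \in restr (flagc K) J.
Proof.
move=> s t ts; rewrite /restr /flagc !inE => /andP [/forallP Fs sJ].
rewrite (subset_trans ts sJ) andbT; apply/forallP => u; apply/implyP => /andP [ut u2].
by have := Fs u; rewrite (subset_trans ut ts) u2.
Qed.

Theorem mainTheorem4 (m : nat) (K : {set {set 'I_m}}) (G : zmodType)
  (a : {set 'I_m} -> G) :
  simplicial_complex K ->
  (forall A B : {set 'I_m},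
     restr K (A :|: B) = restr K A :|: restr K B ->
     a (A :|: B) = a A + a B - a (A :&: B)) ->
  forall J : {set 'I_m},
    a J = \sum_(B in restr (flagc K) J)
            (\sum_(I : {set 'I_m} | I \subset B) a I *~ ((-1) ^+ #|I|))
              *~ ((-1) ^+ #|B|)
    /\ a J = \sum_(I in restr (flagc K) J)
               a I *~ (1 - euler (link (restr (flagc K) J) I)).
Proof.
move=> [K0 Kdown K1] H J.
have P1 : a J = \sum_(B in restr (flagc K) J)
            (\sum_(I : {set 'I_m} | I \subset B) a I *~ ((-1) ^+ #|I|))
              *~ ((-1) ^+ #|B|).
  rewrite (mobius a (erefl #|J|)) (bigID (fun B : {set 'I_m} => B \in flagc K)) /=.
  rewrite [X in _ + X]big1 ?addr0; last first.
    move=> B /andP [BJ]; rewrite /flagc inE negb_forall => /existsP [s].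
    rewrite negb_imply => /andP [/andP [sB s2] sK].
    have : [|| (#|s| == 0)%N, (#|s| == 1)%N | (#|s| == 2)%N].
      by move: s2; case: #|s| => [|[|[|]]].
    case/or3P.
    - by move/eqP/cards0_eq => s0; move: sK; rewrite s0 K0.
    - by case/cards1P => x sx; move: sK; rewrite sx K1.
    case/cards2P => x [y [xy sxy]].
    rewrite (SS_zero Kdown H xy) ?mul0rz //; first by rewrite -sxy.
      by apply: (subsetP sB); rewrite sxy !inE eqxx.
    by apply: (subsetP sB); rewrite sxy !inE eqxx orbT.
  by apply: eq_big => [B|B _ //]; rewrite /restr [in RHS]inE andbC.
split=> //; rewrite P1.
under eq_bigr => B _ do rewrite mulrz_suml.
rewrite (exchange_big_dep (fun I : {set 'I_m} => I \in restr (flagc K) J)) /=; last first.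
  by move=> B I BL IB; apply: (L_down IB BL).
apply: eq_bigr => I IL.
rewrite -(coef_id (@L_down m K J) IL) mulrz_sumr.
by apply: eq_bigr => B _; rewrite mulrzA.
Qed.
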